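(* For every integer $n\ge 2$, the lattice $M_n$ is a Shannon lattice.
   Context: $M_n$ is the lattice consisting of a smallest element, a largest element, and $n-2$ pairwise incomparable elements lying strictly between them. Lattices have order $\supseteq$, meet $\cap$, join $\uplus$. A polymatroid function on a finite lattice $L$ is $h:L\to\mathbb{R}$ that is non-negative, increasing ($x\supseteq y\Rightarrow h(x)\ge h(y)$) and submodular ($h(x)+h(y)\ge h(x\uplus y)+h(x\cap y)$). $h$ is entropic if there exist jointly distributed discrete random variables $(X_x)_{x\in L}$ such that for all $x,y$ the variable $X_{x\uplus y}$ and the pair $(X_x,X_y)$ are functions of each other, and $h(x)=H(X_x)$ (Shannon entropy) for all $x$. $L$ is a Shannon lattice if the set of polymatroid functions on $L$ equals the closure in $\mathbb{R}^L$ of the set of entropic functions on $L$. *)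

(* Defs.v *)
From HB Require Import structures.
From mathcomp Require Import all_boot all_order all_algebra.
From mathcomp Require Import reals exp.
Set Implicit Arguments. Unset Strict Implicit. Unset Printing Implicit Defensive.
Import Order.TTheory GRing.Theory Num.Theory.
Local Open Scope ring_scope.

(** A finite lattice is given by its carrier [T : finType], its order [le]
    ([le x y] means "y ⊇ x" in the paper's notation), its join [join]
    (the paper's ⊎) and its meet [meet] (the paper's ∩). *)

Section Shannon.
Variable R : realType.
Variable T : finType.
Variables (le : rel T) (join meet : T -> T -> T).

Definition polymatroid (h : T -> R) : Prop :=
  [/\ (forall x, 0 <= h x),
      (forall x y, le y x -> h y <= h x) &
      (forall x y, h (join x y) + h (meet x y) <= h x + h y)].

Definition is_distr (Omega : finType) (p : Omega -> R) : Prop :=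
  (forall w, 0 <= p w) /\ \sum_(w : Omega) p w = 1.

Definition prob (Omega : finType) (p : Omega -> R) (X : Omega -> nat) (v : nat) : R :=
  \sum_(w : Omega | X w == v) p w.

Definition entropy (Omega : finType) (p : Omega -> R) (X : Omega -> nat) : R :=
  \sum_(v <- undup [seq X w | w <- enum Omega]) - (prob p X v * ln (prob p X v)).

Definition entropic (h : T -> R) : Prop :=
  exists (Omega : finType) (p : Omega -> R) (X : T -> Omega -> nat),
    [/\ is_distr p,
        (forall x y,
           (exists f : nat -> nat -> nat,
              forall w, 0 < p w -> X (join x y) w = f (X x w) (X y w)) /\
           (exists g : nat -> nat * nat,
              forall w, 0 < p w -> (X x w, X y w) = g (X (join x y) w))) &
        (forall x, h x = entropy p (X x))].

Definition in_entropic_closure (h : T -> R) : Prop :=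
  forall eps : R, 0 < eps ->
    exists g : T -> R, entropic g /\ forall x, `|h x - g x| < eps.

Definition shannon_lattice : Prop :=
  forall h : T -> R, polymatroid h <-> in_entropic_closure h.

End Shannon.

(** The lattice M_n on the carrier 'I_n (n >= 2): 0 is the smallest element,
    1 is the largest element, and 2, ..., n-1 are pairwise incomparable
    elements strictly between them. *)
Section Mn.
Variable n : nat.

Definition Mn_le (x y : 'I_n) : bool :=
  [|| x == y, val x == 0%N | val y == 1%N].

Definition Mn_join (x y : 'I_n) : 'I_n :=
  if Mn_le x y then y else if Mn_le y x then x else insubd x 1%N.

Definition Mn_meet (x y : 'I_n) : 'I_n :=
  if Mn_le x y then x else if Mn_le y x then y else insubd x 0%N.
End Mn.

(* Main.v *)
Require Import Defs.
From HB Require Import structures.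
From mathcomp Require Import all_boot all_order all_algebra.
From mathcomp Require Import reals exp sequences.
From mathcomp Require Import ring lra.
Set Implicit Arguments. Unset Strict Implicit. Unset Printing Implicit Defensive.
Import Order.TTheory GRing.Theory Num.Theory.
Local Open Scope ring_scope.

Section Ent.
Variable R : realType.
Variable Omega : finType.
Variable p : Omega -> R.

Definition PK (K : Omega -> nat) (w : Omega) : R := prob p K (K w).



Lemma sum_partition (K : Omega -> nat) (F : Omega -> R) :
  \sum_w F w = \sum_(v <- undup [seq K w | w <- enum Omega]) \sum_(w | K w == v) F w.
Proof.
under [RHS]eq_bigr do rewrite big_mkcond.
rewrite exchange_big /=; apply: eq_bigr => w _.
rewrite (bigD1_seq (K w)) ?undup_uniq //; last first.
  by rewrite mem_undup; apply/mapP; exists w; rewrite ?mem_enum.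
rewrite eqxx big1 /=; first by rewrite addr0.
by move=> v /negbTE; rewrite eq_sym => ->.
Qed.

Lemma entropyE (K : Omega -> nat) :
  entropy p K = - \sum_w p w * ln (PK K w).
Proof.
rewrite /entropy (sum_partition K) -sumrN; apply: eq_bigr => v _.
rewrite -sumrN /prob big_distrl /= -sumrN; apply: eq_bigr => w /eqP Kw.
by rewrite /PK /prob Kw.
Qed.

Hypothesis p_ge0 : forall w, 0 <= p w.
Hypothesis p_sum : \sum_w p w = 1.

Definition Pk (T : eqType) (K : Omega -> T) (w : Omega) : R :=
  \sum_(v | K v == K w) p v.

Lemma PkE (T : eqType) (K : Omega -> T) w :
  Pk K w = \sum_v (if K v == K w then p v else 0).
Proof. by rewrite /Pk big_mkcond. Qed.

Lemma Pk_ge (T : eqType) (K : Omega -> T) w : p w <= Pk K w.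
Proof.
rewrite /Pk (bigD1 w) //= lerDl; apply: sumr_ge0 => v _; exact: p_ge0.
Qed.

Lemma Pk_le1 (T : eqType) (K : Omega -> T) w : Pk K w <= 1.
Proof.
rewrite -p_sum PkE; apply: ler_sum => v _; case: ifP => // _; exact: p_ge0.
Qed.

Lemma Pk_ge0 (T : eqType) (K : Omega -> T) w : 0 <= Pk K w.
Proof. exact: le_trans (p_ge0 w) (Pk_ge K w). Qed.

Lemma Pk_gt0 (T : eqType) (K : Omega -> T) w : 0 < p w -> 0 < Pk K w.
Proof. by move=> h; apply: lt_le_trans h (Pk_ge K w). Qed.

Lemma p0 w : ~~ (0 < p w) -> p w = 0.
Proof. by move=> h; apply/eqP; rewrite eq_le p_ge0 andbT leNgt. Qed.

Lemma entropy_ge0 (K : Omega -> nat) : 0 <= entropy p K.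
Proof.
rewrite entropyE oppr_ge0; apply: sumr_le0 => w _.
rewrite mulr_ge0_le0 ?p_ge0 //; apply: ln_le0; exact: Pk_le1.
Qed.

Lemma entropy_mono (A B : Omega -> nat) :
  (forall w w', 0 < p w -> 0 < p w' -> A w = A w' -> B w = B w') ->
  entropy p B <= entropy p A.
Proof.
move=> hAB; rewrite !entropyE lerN2; apply: ler_sum => w _.
have [pw|pw] := boolP (0 < p w); last by rewrite p0 // !mul0r.
apply: ler_wpM2l; first exact: p_ge0.
rewrite ler_ln ?posrE ?Pk_gt0 //.
rewrite /PK /prob -/(Pk A w) -/(Pk B w) !PkE; apply: ler_sum => v _.
case: eqP => [Av|_]; last by case: ifP => // _; exact: p_ge0.
have [pv|pv] := boolP (0 < p v); last by rewrite p0 //; case: ifP.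
by rewrite (hAB v w) // eqxx.
Qed.

Lemma ln_le_sub1 (x : R) : 0 < x -> ln x <= x - 1.
Proof.
move=> x0; have := @le_ln1Dx R (x - 1); rewrite addrCA subrr addr0; apply.

lra.
Qed.


Lemma Pk_ext (T : eqType) (K : Omega -> T) w w' : K w = K w' -> Pk K w = Pk K w'.
Proof. by rewrite /Pk => ->. Qed.

Section Submod.
Variables (A B J M : Omega -> nat).
Hypothesis hJ : forall w w', 0 < p w -> 0 < p w' ->
  (J w = J w' <-> (A w = A w' /\ B w = B w')).
Hypothesis hMA : forall w w', 0 < p w -> 0 < p w' -> A w = A w' -> M w = M w'.
Hypothesis hMB : forall w w', 0 < p w -> 0 < p w' -> B w = B w' -> M w = M w'.

Let AB w := (A w, B w).

Lemma PJ_AB w : 0 < p w -> Pk J w = Pk AB w.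
Proof.
move=> pw; rewrite !PkE; apply: eq_bigr => v _.
have [pv|pv] := boolP (0 < p v); last by rewrite p0 //; do 2 case: ifP.
rewrite /AB; have := hJ pv pw; case: (J v =P J w) => [e [h _]|ne [_ h]].
  by have [-> ->] := h e; rewrite eqxx.
case: eqP => // -[a b]; by case: ne; apply h.
Qed.

Lemma inner_AB w' : 0 < p w' ->
  \sum_w (if B w == B w' then p w * Pk A w / Pk AB w else 0) <= Pk M w'.
Proof.
move=> pw'.
pose S u := \sum_v (if AB v == (A u, B w') then p v else 0).
have step : forall w, (if B w == B w' then p w * Pk A w / Pk AB w else 0) =
   \sum_u (if AB w == (A u, B w') then p u * (p w / S u) else 0).
  move=> w; case: (B w =P B w') => [e|ne].
    rewrite PkE big_distrr big_distrl /=; apply: eq_bigr => u _.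
    rewrite /AB e; case: (A u =P A w) => [au|na].
      rewrite au eqxx /S /Pk /AB.
      have -> : (\sum_(v | (A v, B v) == (A w, B w)) p v) =
                \sum_v (if (A v, B v) == (A w, B w') then p v else 0)
        by rewrite big_mkcond e.
      by rewrite au mulrA (mulrC (p w)).
    by rewrite mulr0 mul0r; case: eqP => // -[/esym].
  by rewrite big1 // => u _; rewrite /AB; case: eqP => // -[_ /ne].
rewrite (eq_bigr _ (fun w _ => step w)) exchange_big /= PkE.
apply: ler_sum => u _.
have -> : \sum_w (if AB w == (A u, B w') then p u * (p w / S u) else 0) =
          p u * (S u / S u).
  rewrite mulrA -[in RHS]mulrA big_distrl /= big_distrr /=.
  by apply: eq_bigr => w _; case: ifP; rewrite ?mul0r ?mulr0.
have [pu|pu] := boolP (0 < p u); last by rewrite p0 // mul0r; case: ifP.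
have [Su|Su] := eqVneq (S u) 0.
  rewrite Su mul0r mulr0; case: ifP => _ //; exact: p_ge0.
have [v /andP[cv pv]] : exists v, (AB v == (A u, B w')) && (0 < p v).
  apply/existsP; apply: contraNT Su; rewrite negb_exists => /forallP h.
  apply/eqP; apply: big1 => v _; have := h v; rewrite negb_and.
  by case: ifP => //= _ /p0.
move: cv; rewrite /AB => /eqP [av bv].
have -> : M u == M w' by rewrite (hMA pu pv (esym av)) (hMB pv pw' bv).
by rewrite divff // mulr1.
Qed.

Lemma key_ineq :
  \sum_w p w * (Pk A w * Pk B w / (Pk AB w * Pk M w)) <= 1.
Proof.
have step : forall w, p w * (Pk A w * Pk B w / (Pk AB w * Pk M w)) =
   \sum_w' (if B w' == B w then p w' * (p w * Pk A w / (Pk AB w * Pk M w)) else 0).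
  move=> w; rewrite (PkE B w) big_distrr /= big_distrl /= big_distrr /=; apply: eq_bigr => w' _.
  by case: ifP => _; rewrite ?mulr0 ?mul0r //; ring.
rewrite (eq_bigr _ (fun w _ => step w)) exchange_big /= -p_sum.
apply: ler_sum => w' _.
have [pw'|pw'] := boolP (0 < p w'); last by rewrite p0 // big1 // => w _; rewrite mul0r; case: ifP.
have PMpos := Pk_gt0 M pw'.
apply: (@le_trans _ _ (p w' / Pk M w' *
   \sum_w (if B w == B w' then p w * Pk A w / Pk AB w else 0))).
  rewrite big_distrr /=; apply: ler_sum => w _; rewrite [B w' == _]eq_sym.
  case: (B w =P B w') => [e|_]; last by rewrite mulr0.
  have [pw|pw] := boolP (0 < p w); last by rewrite !(p0 pw) !mul0r !mulr0.
  rewrite (Pk_ext (w := w) (w' := w') (hMB pw pw' e)) invfM.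
  by rewrite le_eqVlt; apply/orP; left; apply/eqP; ring.
rewrite -{2}(mulr1 (p w')) -mulrA ler_wpM2l ?p_ge0 //.
by rewrite mulrC ler_pdivrMr // mul1r inner_AB.
Qed.

Lemma entropy_submod :
  entropy p J + entropy p M <= entropy p A + entropy p B.
Proof.
have H : \sum_w (p w * ln (PK A w) + p w * ln (PK B w)) <=
         \sum_w (p w * ln (PK J w) + p w * ln (PK M w)) +
         \sum_w p w * (Pk A w * Pk B w / (Pk AB w * Pk M w) - 1).
  rewrite -big_split /=; apply: ler_sum => w _.
  have [pw|pw] := boolP (0 < p w); last by rewrite !(p0 pw) !mul0r !addr0.
  rewrite /PK /prob -/(Pk A w) -/(Pk B w) -/(Pk J w) -/(Pk M w) (PJ_AB pw).
  have pA := Pk_gt0 A pw; have pB := Pk_gt0 B pw.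
  have pAB := Pk_gt0 AB pw; have pM := Pk_gt0 M pw.
  have hr : 0 < Pk A w * Pk B w / (Pk AB w * Pk M w) by rewrite divr_gt0 ?mulr_gt0.
  have h := ln_le_sub1 hr.
  rewrite ln_div ?posrE ?mulr_gt0 // lnM ?posrE // lnM ?posrE // in h.
  have := ler_wpM2l (p_ge0 w) h; lra.
have H2 : \sum_w p w * (Pk A w * Pk B w / (Pk AB w * Pk M w) - 1) <= 0.
  under eq_bigr do rewrite mulrBr mulr1.
  by rewrite sumrB p_sum subr_le0 key_ineq.
rewrite !entropyE; move: H; rewrite !big_split /=; lra.
Qed.
End Submod.

End Ent.

Section Lat.
Variable R : realType.
Variable n : nat.
Hypothesis n2 : (2 <= n)%N.

Lemma insubd_val (x : 'I_n) k : (k < n)%N -> val (insubd x k) = k.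
Proof. by move=> kn; rewrite val_insubd kn. Qed.

Lemma Mn_join_le (x y : 'I_n) : Mn_le x y -> Mn_join x y = y.
Proof. by rewrite /Mn_join => ->. Qed.

Lemma bot_le (x z : 'I_n) : Mn_le (insubd x 0) z.
Proof. by rewrite /Mn_le insubd_val ?eqxx ?orbT //; apply: leq_trans n2. Qed.

Lemma entropic_polymatroid (h : 'I_n -> R) :
  entropic (@Mn_join n) h -> polymatroid (@Mn_le n) (@Mn_join n) (@Mn_meet n) h.
Proof.
move=> [Omega [p [X [[pge psum] hfun hh]]]].
have det : forall x y w w', 0 < p w -> 0 < p w' ->
   (X (Mn_join x y) w = X (Mn_join x y) w' <-> (X x w = X x w' /\ X y w = X y w')).
  move=> x y w w' pw pw'; have [[f hf] [g hg]] := hfun x y; split.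
    by move=> e; have := hg w pw; rewrite e -(hg w' pw') => -[-> ->].
  by move=> [e1 e2]; rewrite (hf w pw) (hf w' pw') e1 e2.
have mono : forall x y, Mn_le y x -> h y <= h x.
  move=> x y le; rewrite !hh; apply: entropy_mono => // w w' pw pw' e.
  by have /(_ pw pw')[] := det y x w w'; rewrite Mn_join_le // => /(_ e) [].
split.
- by move=> x; rewrite hh; apply: entropy_ge0.
- exact: mono.
move=> x y; rewrite /Mn_join /Mn_meet.
case: ifP => lexy; first by rewrite addrC.
case: ifP => leyx; first by [].
rewrite !hh; apply: entropy_submod => //.
- move=> w w' pw pw'; have := det x y w w' pw pw'.
  by rewrite /Mn_join lexy leyx.
- move=> w w' pw pw' e.
  have := det (insubd x 0) x w w' pw pw'; rewrite Mn_join_le ?bot_le //.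
  by case=> /(_ e) [].
- move=> w w' pw pw' e.
  have := det (insubd x 0) y w w' pw pw'; rewrite Mn_join_le ?bot_le //.
  by case=> /(_ e) [].
Qed.

Lemma closure_polymatroid (h : 'I_n -> R) :
  in_entropic_closure (@Mn_join n) h -> polymatroid (@Mn_le n) (@Mn_join n) (@Mn_meet n) h.
Proof.
move=> hc.
have approx : forall e : R, 0 < e -> exists g : 'I_n -> R,
    polymatroid (@Mn_le n) (@Mn_join n) (@Mn_meet n) g /\ forall x, `|h x - g x| < e.
  move=> e e0; have [g [eg hg]] := hc e e0; exists g; split => //.
  exact: entropic_polymatroid.
have near : forall e : R, 0 < e -> exists g : 'I_n -> R,
    polymatroid (@Mn_le n) (@Mn_join n) (@Mn_meet n) g /\
    (forall x, (g x - e <= h x) && (h x <= g x + e)).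
  move=> e e0; have [g [pg hg]] := approx e e0; exists g; split => // x.
  have := hg x; rewrite ltr_norml => /andP[a b]; apply/andP; split; lra.
split.
- move=> x; apply/ler_addgt0Pr => e e0; have [g [[g0 _ _] hg]] := near e e0.
  have := hg x; have := g0 x; move=> ? /andP[? ?]; lra.
- move=> x y le; apply/ler_addgt0Pr => e e0.
  have e2 : 0 < e / 2 by rewrite divr_gt0.
  have [g [[_ gm _] hg]] := near _ e2.
  have := gm x y le; have := hg x; have := hg y.
  move=> /andP[? ?] /andP[? ?] ?; lra.
- move=> x y; apply/ler_addgt0Pr => e e0.
  have e4 : 0 < e / 4 by rewrite divr_gt0.
  have [g [[_ _ gs] hg]] := near _ e4.
  have := gs x y; have := hg x; have := hg y; have := hg (Mn_join x y); have := hg (Mn_meet x y).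
  move=> /andP[? ?] /andP[? ?] /andP[? ?] /andP[? ?] ?; lra.
Qed.
End Lat.

Section Kinds.
Variable p : nat.
Hypothesis pp : prime p.
Local Notation F := 'F_p.

Inductive kind := KC | KL of F | KF.

Definition obs (k : kind) (z : F * F) : nat :=
  match k with KC => 0%N | KL a => val (z.1 + a * z.2) | KF => pickle z end.

Definition level (k : kind) : nat :=
  match k with KC => 0%N | KL _ => 1%N | KF => 2%N end.

Lemma card_obs k z : #|[pred z' : F * F | obs k z' == obs k z]| = (p ^ (2 - level k))%N.
Proof.
case: k => [|a|].
- rewrite (@eq_card _ _ [pred z : F * F | true]) // -/(#|{: F * F}|) card_prod card_Fp //.
- set c := z.1 + a * z.2.
  have E : [pred z' : F * F | obs (KL a) z' == obs (KL a) z] =i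
            [set (c - a * v, v) | v : F].
    move=> [u v]; rewrite inE [obs _ _]/obs [obs _ z]/obs -/c; apply/eqP/imsetP => [/val_inj e|[v' _ [-> ->]]].
      by exists v => //; rewrite -e addrK.
    by rewrite subrK.
  rewrite (eq_card E) card_imset ?card_Fp ?expn1 // => v v' [_ ->] //.
- rewrite (@eq_card _ _ (pred1 z)) ?card1 // => z'.
  by rewrite !inE /obs (inj_eq (pcan_inj pickleK)).
Qed.
End Kinds.

Section Schemes.
Variable p : nat.
Hypothesis pp : prime p.
Variable n : nat.
Hypothesis np : (n <= p)%N.
Variable i0 : 'I_n.
Local Notation F := 'F_p.

Definition atom (x : 'I_n) := (2 <= val x)%N.
Definition I' := option (option {ffun 'I_n -> bool}).

Definition kind_of (s : option I') (x : 'I_n) : kind p :=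
  match s with
  | None => KC p
  | Some None => KL 0
  | Some (Some None) =>
      if val x == 0%N then KC p else if atom x && (x == i0) then KC p else KL 0
  | Some (Some (Some f)) =>
      if val x == 0%N then KC p else if val x == 1%N then KF p
      else if f x then KF p else KL (val x)%:R
  end.

Definition eqo (k : kind p) z z' := obs k z = obs k z'.

Lemma eqoF k z z' : eqo (KF p) z z' -> eqo k z z'.
Proof. by rewrite /eqo /= => /(pcan_inj pickleK) ->. Qed.

Lemma eqoL a z z' : eqo (KL a) z z' -> z.1 + a * z.2 = z'.1 + a * z'.2.
Proof. exact: val_inj. Qed.

Lemma kind_mono s (x y : 'I_n) z z' : Mn_le x y ->
  eqo (kind_of s y) z z' -> eqo (kind_of s x) z z'.
Proof.
rewrite /Mn_le => /orP[/eqP -> //|/orP[/eqP x0|/eqP y1]].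
  case: s => [[[f|]|]|] //=; by rewrite x0.
case: s => [[[f|]|]|] //=; rewrite y1 /=.
- by move=> e; apply: eqoF.
- by rewrite /atom y1 /=; case: ifP => // _; case: ifP.
Qed.

Lemma Fp_nat_inj (a b : nat) : (a < p)%N -> (b < p)%N -> (a%:R : F) = b%:R -> a = b.
Proof.
move=> ap bp e; have := val_Fp_nat pp a; rewrite e val_Fp_nat // !modn_small //.
Qed.

Lemma kind_top s (x y t : 'I_n) z z' : ~~ Mn_le x y -> ~~ Mn_le y x -> val t = 1%N ->
  eqo (kind_of s x) z z' -> eqo (kind_of s y) z z' -> eqo (kind_of s t) z z'.
Proof.
rewrite /Mn_le !negb_or => /and3P[nxy x0 y1] /and3P[nyx y0 x1] t1.
case: s => [[[f|]|]|]; rewrite /kind_of ?(negbTE x0) ?(negbTE y0) ?t1 //.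
- rewrite (negbTE x1) (negbTE y1) /=.
  case: (f x) => [//|]; case: (f y) => [_ //|].
  move=> /eqoL e1 /eqoL e2.
  have ne : ((val x)%:R : F) != (val y)%:R.
    apply/negP => /eqP /Fp_nat_inj e.
    have := e (leq_trans (ltn_ord x) np) (leq_trans (ltn_ord y) np) => /val_inj exy.
    by rewrite exy eqxx in nxy.
  have h2 : z.2 = z'.2.
    apply: (mulfI (x := (val x)%:R - (val y)%:R)); first by rewrite subr_eq0.
    apply/eqP; rewrite -subr_eq0; apply/eqP.
    transitivity ((z.1 + (val x)%:R * z.2) - (z.1 + (val y)%:R * z.2)
       - ((z'.1 + (val x)%:R * z'.2) - (z'.1 + (val y)%:R * z'.2))); first by ring.
    by rewrite e1 e2; ring.
  have h1 : z.1 = z'.1 by move: e1; rewrite h2 => /addIr.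
  by rewrite /eqo; congr obs; case: z z' h1 h2 {e1 e2} => [? ?] [? ?] /= -> ->.
- rewrite /atom t1 /=.
  case: ifP => hx; case: ifP => hy //.
  by move: hx hy => /andP[_ /eqP hx] /andP[_ /eqP hy]; rewrite hx hy eqxx in nxy.
Qed.
End Schemes.

Section Prob.
Variable R : realType.
Variable p : nat.
Hypothesis pp : prime p.
Variable n : nat.
Hypothesis np : (n <= p)%N.
Variable i0 : 'I_n.
Local Notation F := 'F_p.
Local Notation kind_of := (@kind_of p n i0).

Definition Om := (option (I' n) * (F * F))%type.
Variable pi : option (I' n) -> R.
Hypothesis pi_ge0 : forall s, 0 <= pi s.
Hypothesis pi_sum : \sum_s pi s = 1.

Definition pr (w : Om) : R := pi w.1 / (p ^ 2)%:R.
Definition Xv (x : 'I_n) (w : Om) : nat := pickle (w.1, obs (kind_of w.1 x) w.2).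

Lemma sum_pair (G : Om -> R) : \sum_w G w = \sum_s \sum_z G (s, z).
Proof. by rewrite pair_bigA; apply: eq_bigr => -[]. Qed.

Lemma cardFF : #|{: F * F}| = (p ^ 2)%N.
Proof. by rewrite card_prod card_Fp // expnS expn1. Qed.

Lemma p2_neq0 : (p ^ 2)%:R != 0 :> R.
Proof. by rewrite pnatr_eq0 -lt0n expn_gt0 prime_gt0. Qed.

Lemma sum_constFF (c : R) : \sum_(z : F * F) c = c *+ (p ^ 2).
Proof. by rewrite -cardFF -sumr_const. Qed.

Lemma sum_const_pred (T : finType) (P : pred T) (c : R) : \sum_(i | P i) c = c *+ #|P|.
Proof. by rewrite -sumr_const. Qed.

Lemma pr_ge0 w : 0 <= pr w.
Proof. by rewrite /pr divr_ge0 ?ler0n. Qed.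

Lemma pr_sum : \sum_w pr w = 1.
Proof.
rewrite sum_pair -pi_sum; apply: eq_bigr => s _.
rewrite /pr /= sum_constFF -(mulr_natr (pi s / _)) divfK //; exact: p2_neq0.
Qed.

Lemma Xv_eq x w w' : (Xv x w == Xv x w') = (w.1 == w'.1) && (obs (kind_of w.1 x) w.2 == obs (kind_of w.1 x) w'.2).
Proof.
rewrite /Xv (inj_eq (pcan_inj pickleK)) xpair_eqE.
by case: eqP => //= ->.
Qed.

Lemma PK_Xv x w : PK pr (Xv x) w = pi w.1 / (p ^ level (kind_of w.1 x))%:R.
Proof.
case: w => s z.
rewrite /PK /prob big_mkcond sum_pair (bigD1 s) //= [X in _ + X]big1 ?addr0; last first.
  move=> s' ns; apply: big1 => z' _; rewrite Xv_eq /=.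
  by rewrite (negbTE ns).
rewrite -big_mkcond /=.
under eq_bigl do rewrite Xv_eq eqxx /=.
rewrite /pr /= sum_const_pred card_obs // -(mulr_natr (pi s / _)).
set l := level _.
have l2 : (l <= 2)%N by rewrite /l; case: (kind_of s x).
have e : (p ^ 2 = p ^ (2 - l) * p ^ l)%N by rewrite -expnD subnK.
have q1 : (p ^ (2 - l))%:R != 0 :> R by rewrite pnatr_eq0 -lt0n expn_gt0 prime_gt0.
have q2 : (p ^ l)%:R != 0 :> R by rewrite pnatr_eq0 -lt0n expn_gt0 prime_gt0.
rewrite e natrM; field; by rewrite q1 q2.
Qed.

Lemma entropy_Xv x : entropy pr (Xv x) =
  \sum_s - (pi s * ln (pi s)) + \sum_s pi s * (level (kind_of s x))%:R * ln p%:R.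
Proof.
rewrite entropyE sum_pair -sumrN -big_split /=; apply: eq_bigr => s _.
under eq_bigr do rewrite PK_Xv /=.
rewrite /pr /= sum_constFF.
set Lq := ln _.
have -> : (pi s / (p ^ 2)%:R * Lq) *+ (p ^ 2) = pi s * Lq.
  rewrite -(mulr_natr (pi s / _ * _)); field; by rewrite pnatr_eq0 -lt0n prime_gt0.
rewrite {}/Lq.
have [ps|ps] := boolP (0 < pi s); last first.
  have -> : pi s = 0 by apply/eqP; rewrite eq_le pi_ge0 andbT leNgt.
  by rewrite !mul0r oppr0 add0r.
have pl : 0 < (p ^ level (kind_of s x))%:R :> R by rewrite ltr0n expn_gt0 prime_gt0.
rewrite ln_div ?posrE // natrX lnXn ?ltr0n ?prime_gt0 // -mulr_natr.
ring.
Qed.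

Lemma det_fun (Omega : finType) (A B J : Omega -> nat) :
  (forall w w', A w = A w' -> B w = B w' -> J w = J w') ->
  exists f : nat -> nat -> nat, forall w, J w = f (A w) (B w).
Proof.
move=> h.
exists (fun a b => if [pick w | (A w == a) && (B w == b)] is Some w then J w else 0%N).
move=> w; case: pickP => [w0 /andP[/eqP a /eqP b]|/(_ w)]; last by rewrite !eqxx.
exact: h.
Qed.

Lemma det_fun2 (Omega : finType) (A B J : Omega -> nat) :
  (forall w w', J w = J w' -> A w = A w' /\ B w = B w') ->
  exists g : nat -> nat * nat, forall w, (A w, B w) = g (J w).
Proof.
move=> h.
exists (fun c => if [pick w | J w == c] is Some w then (A w, B w) else (0%N, 0%N)).
move=> w; case: pickP => [w0 /eqP c|/(_ w)]; last by rewrite !eqxx.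
by have [-> ->] := h _ _ c.
Qed.

Lemma Xv_eqP x w w' : Xv x w = Xv x w' <->
  (w.1 = w'.1 /\ eqo (kind_of w.1 x) w.2 w'.2).
Proof.
split.
  by move/eqP; rewrite Xv_eq => /andP[/eqP -> /eqP].
by move=> [e1 e2]; apply/eqP; rewrite Xv_eq e1 eqxx /=; apply/eqP; rewrite -e1.
Qed.

Lemma le_join (x y : 'I_n) : (2 <= n)%N -> Mn_le x (Mn_join x y) /\ Mn_le y (Mn_join x y).
Proof.
move=> n2; rewrite /Mn_join; case: ifP => lxy.
  by split=> //; rewrite /Mn_le eqxx.
case: ifP => lyx; first by split=> //; rewrite /Mn_le eqxx.
by rewrite /Mn_le val_insubd n2 eqxx !orbT.
Qed.

Lemma Xv_entropic : (2 <= n)%N -> entropic (@Mn_join n) (fun x => entropy pr (Xv x)).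
Proof.
move=> n2; exists Om, pr, Xv; split => //.
- by split; [exact: pr_ge0 | exact: pr_sum].
move=> x y; have [lx ly] := le_join x y n2; split.
- have [f hf] : exists f : nat -> nat -> nat, forall w, Xv (Mn_join x y) w = f (Xv x w) (Xv y w).
    apply: det_fun => w w' /Xv_eqP [e1 ex] /Xv_eqP [_ ey]; apply/Xv_eqP; split => //.
    move: lx ly; rewrite /Mn_join; case: ifP => lxy; first by [].
    case: ifP => lyx; first by [].
    move=> _ _; apply: (@kind_top p pp n np i0 _ x y); rewrite ?lxy ?lyx //.
    by rewrite val_insubd n2.
  by exists f => w _; apply: hf.
- have [g hg] : exists g : nat -> nat * nat, forall w, (Xv x w, Xv y w) = g (Xv (Mn_join x y) w).
    apply: det_fun2 => w w' /Xv_eqP [e1 ej]; split; apply/Xv_eqP; split => //.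
      exact: kind_mono lx ej.
    exact: kind_mono ly ej.
  by exists g => w _; apply: hg.
Qed.
End Prob.

Section RealLemmas.
Variable R : realType.

Lemma ent_small (x : R) : 0 <= x -> x <= 1 -> - (x * ln x) <= 2 * Num.sqrt x.
Proof.
move=> x0 x1; have [->|xp] := eqVneq x 0; first by rewrite mul0r oppr0 sqrtr0 mulr0.
have xpos : 0 < x by rewrite lt_def xp x0.
set r := Num.sqrt x.
have rp : 0 < r by rewrite sqrtr_gt0.
have ex : x = r ^+ 2 by rewrite sqr_sqrtr.
rewrite ex lnXn // -mulr_natr.
have rip : 0 < r^-1 by rewrite invr_gt0.
have h := ln_le_sub1 rip.
rewrite lnV ?posrE // in h.
have h2 := ler_wpM2l (ltW (exprn_gt0 2 rp)) h.
have e : r ^+ 2 * r^-1 = r by rewrite expr2 mulrK // unitfE gt_eqF.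
rewrite mulrBr e mulr1 in h2.
have : 0 <= r ^+ 2 by rewrite exprn_ge0 // ltW.
nra.
Qed.

Lemma ent_one (d : R) : 0 <= d -> d <= 1 / 2 -> - ((1 - d) * ln (1 - d)) <= 2 * d.
Proof.
move=> d0 d1.
have p1 : 0 < 1 - d by lra.
have pip : 0 < (1 - d)^-1 by rewrite invr_gt0.
have h := ln_le_sub1 pip.
rewrite lnV ?posrE // in h.
have l0 : ln (1 - d) <= 0 by apply: ln_le0; lra.
have e : (1 - d)^-1 - 1 = d / (1 - d) by field; rewrite gt_eqF.
have f : d / (1 - d) <= 2 * d.
  rewrite ler_pdivrMr //; nra.
nra.
Qed.

Lemma sum_option (T : finType) (G : option T -> R) :
  \sum_(s : option T) G s = G None + \sum_(t : T) G (Some t).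
Proof.
rewrite (bigD1 None) //=; congr (_ + _).
rewrite (reindex_omap Some id) /=; last by case.
by apply: eq_bigl => t; rewrite eqxx.
Qed.
End RealLemmas.

Section Prod.
Variable R : realType.
Variable n : nat.
Variable q : 'I_n -> R.
Definition PF (f : {ffun 'I_n -> bool}) : R := \prod_j (if f j then q j else 1 - q j).

Lemma PF_sum : \sum_f PF f = 1.
Proof.
rewrite /PF -(bigA_distr_bigA (fun j (b : bool) => if b then q j else 1 - q j)) /=; apply: big1 => j _.
by rewrite big_bool /= addrC subrK.
Qed.

Lemma PF_sumx x : \sum_(f : {ffun 'I_n -> bool}) (if f x then PF f else 0) = q x.
Proof.
pose G j (b : bool) := if j == x then (if b then q j else 0) else (if b then q j else 1 - q j).
have e : forall f : {ffun 'I_n -> bool}, (if f x then PF f else 0) = \prod_j G j (f j).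
  move=> f; rewrite /PF (bigD1 x) //= [in RHS](bigD1 x) //= /G eqxx.
  case: (f x); last by rewrite !mul0r.
  congr (_ * _); apply: eq_bigr => j /negbTE ->; by [].
rewrite (eq_bigr _ (fun f _ => e f)) -(bigA_distr_bigA G) /= (bigD1 x) //= [X in _ * X]big1.
  by rewrite big_bool /G eqxx /= addr0 mulr1.
by move=> j /negbTE jx; rewrite big_bool /G jx /= addrC subrK.
Qed.

Lemma PF_ge0 f : (forall j, 0 <= q j <= 1) -> 0 <= PF f.
Proof.
move=> hq; apply: prodr_ge0 => j _; have /andP[a b] := hq j.
by case: (f j) => //; rewrite subr_ge0.
Qed.
End Prod.

Section Main.
Variable R : realType.
Variable n : nat.
Hypothesis n2 : (2 <= n)%N.
Variable h : 'I_n -> R.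
Hypothesis hp : polymatroid (@Mn_le n) (@Mn_join n) (@Mn_meet n) h.

Definition b0 : 'I_n := Ordinal (ltnW n2).
Definition t1 : 'I_n := Ordinal n2.

Lemma h_ge0 x : 0 <= h x. Proof. by case: hp. Qed.
Lemma hb0 x : h b0 <= h x.
Proof. by case: hp => _ hm _; apply: hm; rewrite /Mn_le eqxx orbT. Qed.
Lemma ht1 x : h x <= h t1.
Proof. by case: hp => _ hm _; apply: hm; rewrite /Mn_le eqxx !orbT. Qed.

Lemma hsub x y : atom x -> atom y -> x != y -> h t1 + h b0 <= h x + h y.
Proof.
rewrite /atom => ax ay nxy; case: hp => _ _ /(_ x y).
have l1 : Mn_le x y = false.
  rewrite /Mn_le (negbTE nxy) /=; apply/negP => /orP[] /eqP e; move: ax ay => /= ax ay; by rewrite e in ax ay.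
have l2 : Mn_le y x = false.
  rewrite /Mn_le eq_sym (negbTE nxy) /=; apply/negP => /orP[] /eqP e; move: ax ay => /= ax ay; by rewrite e in ax ay.
rewrite /Mn_join /Mn_meet l1 l2.
have -> : insubd x 1%N = t1 by apply: val_inj; rewrite val_insubd n2.
by have -> : insubd x 0%N = b0 by apply: val_inj; rewrite val_insubd (ltnW n2).
Qed.

Definition kk (i : 'I_n) : R := if atom i then h i else h t1.

Variable i0 : 'I_n.
Hypothesis hi0 : forall j, kk i0 <= kk j.

Definition h0 := h b0.
Definition c := h t1 - h0.
Definition bp := kk i0 - h0.
Definition m := if bp <= c / 2 then bp else c / 2.
Definition N (j : 'I_n) := h j - h0 - m - (if j == i0 then 0 else c - 2 * m).
Definition q (j : 'I_n) := if atom j then N j / m else 0.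

Lemma c_ge0 : 0 <= c. Proof. by rewrite /c subr_ge0 hb0. Qed.
Lemma bp_ge0 : 0 <= bp.
Proof. by rewrite /bp /kk subr_ge0; case: ifP => _; rewrite hb0. Qed.
Lemma m_facts : [/\ 0 <= m, m <= c / 2 & m <= bp].
Proof.
have := c_ge0; have := bp_ge0; rewrite /m; case: ifP => hb; split; lra.
Qed.

Lemma N_facts j : atom j -> 0 <= N j <= m.
Proof.
move=> aj.
have Hj1 := hb0 j; have Hj2 := ht1 j; have Hk := hi0 j.
have Hi1 := hb0 i0; have Hi2 := ht1 i0.
rewrite /N /m; case: (leP bp (c / 2)) => hb.
all: rewrite /kk aj in Hk; rewrite /bp /c /h0 /kk in hb *.
all: case: (boolP (atom i0)) => ai; rewrite ?(negbTE ai) ?ai /= in Hk hb *.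
all: case: (j =P i0) => [ji|/eqP nji].
all: try (subst j; apply/andP; split; lra).
all: try (by subst j; rewrite aj in ai).
all: try (have := hsub aj ai nji).
all: intros; apply/andP; split; lra.
Qed.

Lemma mq j : atom j -> m * q j = N j.
Proof.
move=> aj; rewrite /q aj; have /andP[a b] := N_facts aj.
have [m0|m0] := eqVneq m 0.
  by rewrite m0 mul0r; apply/eqP; rewrite eq_le a /=; rewrite m0 in b.
by rewrite mulrC divfK.
Qed.

Lemma q01 j : 0 <= q j <= 1.
Proof.
rewrite /q; case: ifP => aj; last by rewrite lexx ler01.
have /andP[a b] := N_facts aj.
have [m0|m0] := eqVneq m 0; first by rewrite m0 invr0 mulr0 lexx ler01.
have mp : 0 < m by case: m_facts => ? _ _; rewrite lt_def m0.
by rewrite divr_ge0 ?ler_pdivrMr ?mul1r // ltW.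
Qed.

Definition mu (t : I' n) : R :=
  match t with
  | None => h0
  | Some None => c - 2 * m
  | Some (Some f) => m * PF q f
  end.

Lemma mu_ge0 t : 0 <= mu t.
Proof.
case: t => [[f|]|] /=.
- by case: m_facts => ? _ _; rewrite mulr_ge0 // PF_ge0 // => j; exact: q01.
- by case: m_facts => _ ? _; lra.
- exact: h_ge0.
Qed.

Lemma level_sum p x :
  \sum_(t : I' n) mu t * (level (kind_of p i0 (Some t) x))%:R = h x.
Proof.
rewrite sum_option sum_option /=.
have [x0|x0] := eqVneq (x : nat) 0%N.
  rewrite big1 => [|f _]; last by rewrite mulr0.
  rewrite mulr0 mulr1 !addr0 /h0; congr h; apply: val_inj; by rewrite /= x0.
have [x1|x1] := eqVneq (x : nat) 1%N.
  rewrite /atom /= x1 /=.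
  rewrite -big_distrl -mulr_sumr PF_sum /= mulr1.
  have -> : x = t1 by apply: val_inj.
  rewrite /c; lra.
have ax : atom x by rewrite /atom /=; move: x0 x1; case: (nat_of_ord x) => [|[|]].
rewrite ax /=.
have e : forall f : {ffun 'I_n -> bool}, m * PF q f * (level (if f x then KF p else KL (x : nat)%:R))%:R
   = m * PF q f + m * (if f x then PF q f else 0).
  by move=> f; case: (f x) => /=; rewrite ?mulr0 ?addr0 ?mulr1 //; lra.
rewrite (eq_bigr _ (fun f _ => e f)) big_split /= -mulr_sumr -mulr_sumr PF_sum PF_sumx mulr1 mq //.
rewrite /N /= mulr1; case: (x == i0) => /=; rewrite ?mulr0 ?mulr1; lra.
Qed.

Lemma sumc (T : finType) (a : R) : \sum_(t : T) a = a *+ #|T|.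
Proof. by rewrite -sumr_const. Qed.

Lemma approx eps : 0 < eps ->
  exists g : 'I_n -> R, entropic (@Mn_join n) g /\ forall x, `|h x - g x| < eps.
Proof.
move=> e0.
pose Mtot := \sum_(t : I' n) mu t.
have M0 : 0 <= Mtot by apply: sumr_ge0 => t _; exact: mu_ge0.
have mu_le : forall t, mu t <= Mtot.
  move=> t; rewrite /Mtot (bigD1 t) //= lerDl; apply: sumr_ge0 => u _; exact: mu_ge0.
pose K : R := #|{: I' n}|%:R.
have K0 : 0 <= K by rewrite ler0n.
pose C := 2 + 2 * K.
have C0 : 0 < C by rewrite /C; lra.
pose B := Mtot * (C / eps) ^+ 2 + 2 * Mtot + 1.
have B1 : 1 <= B.
  have : 0 <= Mtot * (C / eps) ^+ 2 by rewrite mulr_ge0 // exprn_ge0 // divr_ge0 // ltW.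
  rewrite /B; lra.
have [p [np [pp LB]]] : exists p, [/\ (n <= p)%N, prime p & B < ln p%:R].
  have eB : 0 <= expR B by rewrite ltW // expR_gt0.
  have hN := archi_boundP eB.
  have [p Np pp] := prime_above (maxn n (Num.bound (expR B))).
  exists p; split => //.
    by apply: leq_trans (ltnW Np); rewrite leq_maxl.
  have Nle : ((Num.bound (expR B))%:R : R) <= p%:R.
    by rewrite ler_nat; apply: leq_trans (ltnW Np); rewrite leq_maxr.
  have := lt_le_trans hN Nle => hp'.
  rewrite -{1}(expRK B) ltr_ln ?posrE ?expR_gt0 //.
  exact: lt_trans (expR_gt0 B) hp'.
set L := @ln R p%:R.
have LB2 : B < L := LB.
have L0 : 0 < L by lra.
pose d := Mtot / L.
have d0 : 0 <= d by rewrite divr_ge0 // ltW.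
have d2 : d <= 1 / 2.
  have : 0 <= Mtot * (C / eps) ^+ 2 by rewrite mulr_ge0 // exprn_ge0 // divr_ge0 // ltW.
  rewrite /d ler_pdivrMr //; rewrite /B in LB2; lra.
pose pi (s : option (I' n)) : R := if s is Some t then mu t / L else 1 - d.
have pi_le_d : forall t, mu t / L <= d.
  by move=> t; rewrite /d ler_pM2r ?invr_gt0 // mu_le.
have pi_ge0 : forall s, 0 <= pi s.
  case=> [t|] /=; last by lra.
  by rewrite divr_ge0 ?mu_ge0 // ltW.
have pi_le1 : forall s, pi s <= 1.
  case=> [t|] /=; last by lra.
  have := pi_le_d t; lra.
have pi_sum : \sum_s pi s = 1.
  rewrite sum_option /= -mulr_suml -/Mtot -/d; lra.
exists (fun x => entropy (@pr R p n pi) (@Xv p n i0 x)).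
split; first exact: (Xv_entropic pp np i0 pi_ge0 pi_sum n2).
move=> x; rewrite (entropy_Xv pp i0 pi_ge0 x).
have -> : \sum_s pi s * (level (kind_of p i0 s x))%:R * L = h x.
  rewrite sum_option /= mulr0 mul0r add0r -[RHS](level_sum p x).
  apply: eq_bigr => t _; rewrite /pi; field; by rewrite gt_eqF.
set H := \sum_s _.
have H0 : 0 <= H.
  apply: sumr_ge0 => s _; rewrite oppr_ge0 mulr_ge0_le0 ?pi_ge0 //.
  exact: ln_le0 (pi_le1 s).
have Hle : H <= 2 * d + (2 * Num.sqrt d) * K.
  have sK : \sum_(t : I' n) 2 * Num.sqrt d = 2 * Num.sqrt d * K by rewrite sumc /K mulr_natr.
  rewrite /H sum_option /= -sK.
  apply: lerD; first exact: ent_one.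
  apply: ler_sum => t _.
  apply: le_trans (ent_small (pi_ge0 (Some t)) (pi_le1 (Some t))) _.
  rewrite ler_pM2l ?ltr0n // ler_sqrt //; exact: pi_le_d.
set sd := Num.sqrt d.
have sd0 : 0 <= sd by apply: sqrtr_ge0.
have sd2 : sd ^+ 2 = d by rewrite sqr_sqrtr.
have sd1 : sd <= 1.
  by rewrite -sqrtr1 ler_sqrt //; lra.
have dsd : d <= sd by rewrite -sd2 expr2; nra.
have ec : 0 < eps / C by rewrite divr_gt0.
have dlt : d < (eps / C) ^+ 2.
  rewrite /d ltr_pdivrMr //.
  have e1 : (eps / C) ^+ 2 * (C / eps) ^+ 2 = 1.
    by rewrite -exprMn mulrA divfK ?gt_eqF // divff ?gt_eqF // expr1n.
  have e2 : 0 < (eps / C) ^+ 2 by rewrite exprn_gt0.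
  have e3 : (eps / C) ^+ 2 * B < (eps / C) ^+ 2 * L by rewrite ltr_pM2l.
  have eB : (eps / C) ^+ 2 * B = Mtot * ((eps / C) ^+ 2 * (C / eps) ^+ 2)
     + (eps / C) ^+ 2 * (2 * Mtot + 1) by rewrite /B; ring.
  rewrite e1 mulr1 in eB.
  have : 0 <= (eps / C) ^+ 2 * (2 * Mtot + 1) by rewrite mulr_ge0 // ?exprn_ge0 // ?ltW //; lra.
  lra.
have sdlt : sd < eps / C.
  by rewrite -(ger0_norm (ltW ec)) -sqrtr_sqr ltr_sqrt // exprn_gt0.
have : C * sd < eps.
  have -> : eps = C * (eps / C) by rewrite mulrC divfK ?gt_eqF.
  by rewrite ltr_pM2l.
rewrite /C => hC.
have -> : h x - (H + h x) = - H by ring.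
rewrite normrN ger0_norm //.
rewrite -/sd in Hle.
lra.
Qed.
End Main.

Theorem theorem6 (R : realType) (n : nat) :
  (2 <= n)%N -> shannon_lattice R (@Mn_le n) (@Mn_join n) (@Mn_meet n).
Proof.
move=> n2 h; split.
- move=> hp eps e0.
  have [i0 _ hi0] := @arg_minP _ _ _ (b0 n2) xpredT (kk n2 h) isT.
  exact: (approx hp (fun j => hi0 j isT) e0).
- exact: closure_polymatroid.
Qed.
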